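(* Let $X_1,\dots,X_n$ be (possibly dependent) random variables taking values in $\{0,1\}$, with $p_i=E(X_i)$, and let $S_n=\sum_{i=1}^n X_i$ and $\lambda=E(S_n)=\sum_{i=1}^n p_i$. Then $$D(P_{S_n}\,\|\,\mathrm{Po}(\lambda))\le \sum_{i=1}^n p_i^2+\Big[\sum_{i=1}^n H(X_i)-H(X_1,\dots,X_n)\Big].$$
   Context: $P_{S_n}$ is the distribution of $S_n$; $\mathrm{Po}(\lambda)$ is the Poisson distribution with mean $\lambda$. For distributions $P,Q$ on a countable set $S$, $D(P\|Q)=\sum_{x\in S}P(x)\log\frac{P(x)}{Q(x)}$ (natural logarithm, with conventions $0\log(0/a)=0$, $0\log(0/0)=0$, $a\log(a/0)=\infty$ for $a>0$). $H(X)=-\sum_x P(x)\log P(x)$ is the Shannon entropy of a discrete random variable or random vector, and $H(X_1,\dots,X_n)$ is the joint entropy. *)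

(* Defs.v *)
From HB Require Import structures.
From mathcomp Require Import all_boot all_order all_algebra.
From mathcomp Require Import reals constructive_ereal sequences exp.
Set Implicit Arguments. Unset Strict Implicit. Unset Printing Implicit Defensive.
Import Order.TTheory GRing.Theory Num.Theory.
Local Open Scope ring_scope.

Section Defs.
Variable R : realType.

(* Joint law of (X_1,...,X_n) : a probability mass function on {0,1}^n,
   an outcome being x : {ffun 'I_n -> bool} (x i = true means X_(i+1) = 1). *)
Definition is_pmf (T : finType) (P : T -> R) : Prop :=
  (forall x, 0 <= P x) /\ \sum_(x : T) P x = 1.

Definition marg (n : nat) (P : {ffun 'I_n -> bool} -> R) (i : 'I_n) (b : bool) : R :=
  \sum_(x : {ffun 'I_n -> bool} | x i == b) P x.

Definition pmean (n : nat) (P : {ffun 'I_n -> bool} -> R) (i : 'I_n) : R :=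
  marg P i true.

Definition Ssum (n : nat) (x : {ffun 'I_n -> bool}) : nat := \sum_(i < n) nat_of_bool (x i).

Definition lawS (n : nat) (P : {ffun 'I_n -> bool} -> R) (k : nat) : R :=
  \sum_(x : {ffun 'I_n -> bool} | Ssum x == k) P x.

Definition poisson (lam : R) (k : nat) : R := expR (- lam) * lam ^+ k / (k`!)%:R.

(* one term p log(p/q) of the relative entropy, with the conventions
   0 log(0/a) = 0 (a >= 0) and p log(p/0) = +oo for p > 0 *)
Definition klterm (p q : R) : \bar R :=
  if p == 0 then 0%E else if q == 0 then +oo%E else (p * ln (p / q))%:E.

(* D(P_{S_n} || Po(lam)) : summed over k = 0..n, the support of P_{S_n}
   (all other terms are 0 by the convention 0 log(0/a) = 0) *)
Definition KL_S_Poisson (n : nat) (P : {ffun 'I_n -> bool} -> R) (lam : R) : \bar R :=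
  \sum_(k < n.+1) klterm (lawS P k) (poisson lam k).

Definition entr (p : R) : R := if p == 0 then 0 else - (p * ln p).

Definition Hjoint (n : nat) (P : {ffun 'I_n -> bool} -> R) : R :=
  \sum_(x : {ffun 'I_n -> bool}) entr (P x).

Definition Hmarg (n : nat) (P : {ffun 'I_n -> bool} -> R) (i : 'I_n) : R :=
  \sum_(b : bool) entr (marg P i b).

End Defs.

(* Main.v *)
From HB Require Import structures.
From mathcomp Require Import all_boot all_order all_algebra.
From mathcomp Require Import reals constructive_ereal sequences exp.
From mathcomp Require Import ring lra.
Require Import Defs.
Import Order.TTheory GRing.Theory Num.Theory.
Set Implicit Arguments. Unset Strict Implicit. Unset Printing Implicit Defensive.
Local Open Scope ring_scope.

Section H.
Variable R : realType.

Lemma ln_le_sub1 (y : R) : 0 < y -> ln y <= y - 1.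
Proof.
move=> y0; have := @le_ln1Dx R (y - 1); rewrite addrCA subrr addr0; apply; lra.
Qed.

Lemma bern_ineq (mu p : R) (k : nat) : 0 <= mu -> 0 <= p ->
  mu ^+ k.+1 + k.+1%:R * p * mu ^+ k <= (mu + p) ^+ k.+1.
Proof.
move=> mu0 p0; elim: k => [|k IH]; first by rewrite expr1 expr0 mulr1 mul1r.
rewrite (exprS (mu + p)).
have a0 : 0 <= mu ^+ k by apply: exprn_ge0.
have e1 : mu ^+ k.+2 = mu * (mu * mu ^+ k) by rewrite !exprS.
have e2 : mu ^+ k.+1 = mu * mu ^+ k by rewrite exprS.
rewrite e1 e2 in IH *.
have k0 : 0 <= k%:R :> R by [].
rewrite -[k.+2]addn1 -[k.+1]addn1 !natrD in IH *.
set a := mu ^+ k in IH a0 *; set m := k%:R in IH k0 *.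
set z := (mu + p) ^+ (k + 1) in IH *.
have h : 0 <= (mu + p) * (z - (mu * a + (m + 1) * p * a)).
  by apply: mulr_ge0; lra.
have h2 : 0 <= (m + 1) * p * p * a by apply: mulr_ge0 => //; apply: mulr_ge0 => //; apply: mulr_ge0 => //; lra.
nra.
Qed.


Lemma poly_coef_bound (n : nat) (p : 'I_n -> R) : (forall i, 0 <= p i) ->
  forall k, k`!%:R * (\prod_(i < n) ((p i)%:P * 'X + 1))`_k <= (\sum_(i < n) p i) ^+ k.
Proof.
elim: n p => [|n IH] p p0 k.
  rewrite big_ord0 big_ord0 coefC; case: k => [|k]; first by rewrite mulr1 expr0.
  by rewrite mulr0 expr0n.
rewrite big_ord_recr big_ord_recr /=.
set Q := \prod_(i < n) _; set mu := \sum_(i < n) _; set q := p ord_max.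
have IHk := IH (fun i => p (widen_ord (leqnSn n) i)) (fun i => p0 _).
rewrite -/Q -/mu in IHk.
have mu0 : 0 <= mu by apply: sumr_ge0 => i _.
have q0 : 0 <= q by apply: p0.
rewrite mulrDr mulr1 mulrA coefD coefMX coefMC.
case: k => [|k] /=.
  rewrite add0r expr0; have := IHk 0%N; by rewrite expr0.
have h1 := IHk k; have h2 := IHk k.+1.
have := @bern_ineq mu q k mu0 q0.
rewrite factS natrM; rewrite factS in h2.
set A := k`!%:R * Q`_k in h1 *; set B := (k.+1 * k`!)%:R * Q`_k.+1 in h2.
have eB : (k.+1%:R * k`!%:R) * (Q`_k * q + Q`_k.+1) = k.+1%:R * q * A + B.
  by rewrite /A /B natrM; ring.
rewrite eB => h3.
have : k.+1%:R * q * A <= k.+1%:R * q * mu ^+ k.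
  by apply: ler_wpM2l => //; apply: mulr_ge0.
lra.
Qed.

Definition wt (n : nat) (p : 'I_n -> R) (x : {ffun 'I_n -> bool}) : R :=
  \prod_(i < n) (if x i then p i else 1).

Lemma prod_poly_expand (n : nat) (p : 'I_n -> R) :
  \prod_(i < n) ((p i)%:P * 'X + 1) =
  \sum_(x : {ffun 'I_n -> bool}) (wt p x)%:P * 'X^(Ssum x).
Proof.
have -> : \prod_(i < n) ((p i)%:P * 'X + 1) =
  \prod_(i < n) \sum_(b : bool) (if b then p i else 1)%:P * 'X^(nat_of_bool b).
  by apply: eq_bigr => i _; rewrite big_bool /= expr1 expr0 polyC1 mulr1.
rewrite bigA_distr_bigA; apply: eq_bigr => x _.
rewrite big_split /= -prodrXr /wt rmorph_prod /=.
by [].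
Qed.

Lemma esym_bound (n : nat) (p : 'I_n -> R) : (forall i, 0 <= p i) ->
  forall k, k`!%:R * \sum_(x : {ffun 'I_n -> bool} | Ssum x == k) wt p x
     <= (\sum_(i < n) p i) ^+ k.
Proof.
move=> p0 k; have := poly_coef_bound p0 k.
rewrite prod_poly_expand coef_sum.
congr (_ * _ <= _); rewrite [RHS]big_mkcond /=; apply: eq_bigr => x _.
by rewrite coefCM coefXn eq_sym; case: eqP => _; rewrite ?mulr1 ?mulr0.
Qed.

Lemma entrE (y : R) : entr y = - (y * ln y).
Proof. by rewrite /entr; case: eqP => [->|_]; rewrite ?mul0r ?oppr0. Qed.

Lemma logsum_term (a b t : R) : 0 <= a -> 0 <= b -> (0 < a -> 0 < b) -> 0 < t ->
  a * ln t + a - t * b <= a * ln (a / b).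
Proof.
move=> a0 b0 ab t0; have [->|an0] := eqVneq a 0.
  rewrite !mul0r add0r.
  by rewrite sub0r oppr_le0 mulr_ge0 // ltW.
have ap : 0 < a by rewrite lt_def an0 a0.
have bp := ab ap.
have h := @ln_le_sub1 (b * t / a) (divr_gt0 (mulr_gt0 bp t0) ap).
rewrite ln_div ?posrE ?mulr_gt0 // lnM ?posrE // in h.
rewrite ln_div ?posrE //.
have e : a * (b * t / a) = t * b by field; rewrite (negPf an0).
have : a * (ln b + ln t - ln a) <= a * (b * t / a - 1) by apply: ler_wpM2l.
rewrite !mulrBr !mulrDr mulr1 e; lra.
Qed.

End H.

Section M.
Variable R : realType.
Variable n : nat.
Variable P : {ffun 'I_n -> bool} -> R.
Hypothesis P0 : forall x, 0 <= P x.
Hypothesis P1 : \sum_(x : {ffun 'I_n -> bool}) P x = 1.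

Local Notation p := (pmean P).
Let lam := \sum_(i < n) p i.
Let q (x : {ffun 'I_n -> bool}) := expR (- lam) * wt p x.

Lemma pmean_ge0 (i : 'I_n) : 0 <= p i.
Proof. by apply: sumr_ge0 => x _. Qed.

Lemma pmeanE (i : 'I_n) : p i = \sum_(x : {ffun 'I_n -> bool} | x i) P x.
Proof. by apply: eq_bigl => x; rewrite eqb_id. Qed.

Lemma le_pmean (x : {ffun 'I_n -> bool}) (i : 'I_n) : x i -> P x <= p i.
Proof.
move=> xi; rewrite pmeanE (bigD1 x) //= lerDl.
by apply: sumr_ge0 => y _.
Qed.

Lemma marg_false (i : 'I_n) : marg P i false = 1 - p i.
Proof.
have := P1; rewrite (bigID (fun x : {ffun 'I_n -> bool} => x i)) /= -pmeanE => h.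
have -> : marg P i false = \sum_(x : {ffun 'I_n -> bool} | ~~ x i) P x.
  by apply: eq_bigl => x; rewrite eqbF_neg.
lra.
Qed.

Lemma pmean_le1 (i : 'I_n) : p i <= 1.
Proof.
have : 0 <= marg P i false by apply: sumr_ge0 => x _.
rewrite marg_false; lra.
Qed.

Lemma lam_ge0 : 0 <= lam.
Proof. by apply: sumr_ge0 => i _; apply: pmean_ge0. Qed.

Lemma wt_ge0 (x : {ffun 'I_n -> bool}) : 0 <= wt p x.
Proof. by apply: prodr_ge0 => i _; case: (x i) => //; apply: pmean_ge0. Qed.

Lemma q_ge0 (x : {ffun 'I_n -> bool}) : 0 <= q x.
Proof. by apply: mulr_ge0; [apply: ltW; apply: expR_gt0 | apply: wt_ge0]. Qed.

Lemma q_pos (x : {ffun 'I_n -> bool}) : 0 < P x -> 0 < q x.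
Proof.
move=> Px; apply: mulr_gt0; first exact: expR_gt0.
apply: prodr_gt0 => i _; case Hx: (x i) => //.
exact: lt_le_trans Px (le_pmean Hx).
Qed.

Lemma ln_q (x : {ffun 'I_n -> bool}) : 0 < P x ->
  ln (q x) = - lam + \sum_(i < n) (if x i then ln (p i) else 0).
Proof.
move=> Px; rewrite /q /wt.
have -> : \prod_(i < n) (if x i then p i else 1) =
          expR (\sum_(i < n) (if x i then ln (p i) else 0)).
  rewrite expR_sum; apply: eq_bigr => i _; case Hx: (x i); last by rewrite expR0.
  by rewrite lnK // posrE; exact: lt_le_trans Px (le_pmean Hx).
by rewrite -expRD expRK.
Qed.

Lemma sum_q_le k : \sum_(x | Ssum x == k) q x <= poisson lam k.
Proof.
rewrite -mulr_sumr /poisson -mulrA; apply: ler_wpM2l; first exact/ltW/expR_gt0.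
have := esym_bound pmean_ge0 k.
have kp : 0 < k`!%:R :> R by rewrite ltr0n fact_gt0.
rewrite -/lam => h; rewrite ler_pdivlMr // mulrC //.
Qed.

Lemma klterm_le k : (klterm (lawS P k) (poisson lam k) <=
  (\sum_(x | Ssum x == k) P x * ln (P x / q x))%:E)%E.
Proof.
rewrite /klterm; set A := lawS P k.
have A0 : 0 <= A by apply: sumr_ge0 => x _.
case: eqP => [Aeq0|Ane0].
  rewrite lee_fin big1 // => x hx.
  by rewrite (psumr_eq0P (fun y _ => P0 y) Aeq0) // mul0r.
case: (pickP (fun x : {ffun 'I_n -> bool} => (Ssum x == k) && (0 < P x)))
   => [x0 /andP[h1 h2] | hnone]; last first.
  exfalso; apply: Ane0; apply: big1 => x hx.
  have := hnone x; rewrite hx /= => /negbT; rewrite -leNgt => h.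
  by apply/eqP; rewrite eq_le h P0.
have Apos : 0 < A by rewrite lt_def A0 andbT; apply/eqP.
have hq := sum_q_le k.
have sq : q x0 <= \sum_(x | Ssum x == k) q x.
  by rewrite (bigD1 x0) //= lerDl; apply: sumr_ge0 => x _; apply: q_ge0.
have popos : 0 < poisson lam k.
  by apply: lt_le_trans (le_trans sq hq); apply: q_pos.
rewrite (negbTE (lt0r_neq0 popos)) lee_fin.
set po := poisson lam k in hq popos *.
have tpos : 0 < A / po by apply: divr_gt0.
apply: le_trans (_ : \sum_(x | Ssum x == k) (P x * ln (A / po) + P x - A / po * q x) <= _); last first.
  apply: ler_sum => x _; apply: logsum_term => //; [exact: q_ge0 | exact: q_pos].
rewrite sumrB big_split /= -mulr_suml -mulr_sumr -/A.
have : A / po * \sum_(x | Ssum x == k) q x <= A / po * po by apply: ler_wpM2l => //; exact: ltW.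
have -> : A / po * po = A by field; rewrite (lt0r_neq0 popos).
have eA : \sum_(i | Ssum i == k) P i = A by []. rewrite eA; lra.
Qed.

Lemma total_eq : \sum_x P x * ln (P x / q x) =
  - Hjoint P + lam - \sum_(i < n) p i * ln (p i).
Proof.
have e : forall x, P x * ln (P x / q x) = P x * ln (P x) + lam * P x
     - \sum_(i < n) (if x i then P x * ln (p i) else 0).
  move=> x; have [Px0|Pxpos] := eqVneq (P x) 0.
    by rewrite Px0 big1 ?mul0r ?mulr0 ?subr0 ?addr0 // => i _; case: (x i); rewrite ?mul0r.
  have Pxp : 0 < P x by rewrite lt_def Pxpos P0.
  rewrite ln_div ?posrE ?q_pos // ln_q //.
  have -> : \sum_(i < n) (if x i then P x * ln (p i) else 0) =
            P x * \sum_(i < n) (if x i then ln (p i) else 0).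
    by rewrite mulr_sumr; apply: eq_bigr => i _; case: (x i); rewrite ?mulr0.
  set S := \sum_(i < n) _; ring.
rewrite (eq_bigr _ (fun x _ => e x)) sumrB big_split /= -mulr_sumr P1 mulr1.
rewrite (exchange_big) /=.
have -> : \sum_x P x * ln (P x) = - Hjoint P.
  by rewrite /Hjoint -sumrN; apply: eq_bigr => x _; rewrite entrE opprK.
congr (_ + _ - _); apply: eq_bigr => i _.
by rewrite -big_mkcond /= -mulr_suml -pmeanE.
Qed.

End M.

Lemma bern_po_le (R : realType) (p : R) : 0 <= p -> p <= 1 ->
  p + (1 - p) * ln (1 - p) <= p ^+ 2.
Proof.
move=> p0 p1; have [e|ne] := eqVneq (1 - p) 0.
  rewrite e mul0r addr0; have -> : p = 1 by lra.
  by rewrite expr1n.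
have pos : 0 < 1 - p by rewrite lt_def ne /=; lra.
have h := ln_le_sub1 pos.
have : (1 - p) * ln (1 - p) <= (1 - p) * (1 - p - 1) by apply: ler_wpM2l => //; lra.
rewrite expr2; nra.
Qed.

Lemma Ssum_le (n : nat) (x : {ffun 'I_n -> bool}) : (Ssum x <= n)%N.
Proof.
have : (Ssum x <= \sum_(i < n) 1)%N by apply: leq_sum => i _; case: (x i).
by rewrite sum1_card card_ord.
Qed.

Theorem proposition1 (R : realType) (n : nat) (P : {ffun 'I_n -> bool} -> R) :
  is_pmf P ->
  let lam := \sum_(i < n) pmean P i in
  (KL_S_Poisson P lam <=
     ((\sum_(i < n) pmean P i ^+ 2) + ((\sum_(i < n) Hmarg P i) - Hjoint P))%:E)%E.
Proof.
move=> [P0 P1] /=.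
set lam := \sum_(i < n) pmean P i.
set q := fun x : {ffun 'I_n -> bool} => expR (- lam) * wt (pmean P) x.
apply: le_trans (_ : (\sum_(k < n.+1) \sum_(x | Ssum x == k) P x * ln (P x / q x))%:E <= _)%E.
  rewrite /KL_S_Poisson -sumEFin; apply: lee_sum => k _; exact: klterm_le.
have -> : \sum_(k < n.+1) \sum_(x | Ssum x == k) P x * ln (P x / q x) =
          \sum_x P x * ln (P x / q x).
  rewrite [RHS](partition_big (fun x => (inord (Ssum x) : 'I_n.+1)) predT) //.
  apply: eq_bigr => k _; apply: eq_bigl => x /=.
  apply/eqP/eqP => [h|h].
    by apply: val_inj; rewrite /= h inordK // ltnS Ssum_le.
  by rewrite -h inordK // ltnS Ssum_le.
rewrite (total_eq P0 P1) lee_fin.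
have key : \sum_(i < n) (pmean P i + (1 - pmean P i) * ln (1 - pmean P i))
    <= \sum_(i < n) pmean P i ^+ 2.
  by apply: ler_sum => i _; apply: bern_po_le; [apply: pmean_ge0 | apply: pmean_le1].
have eH : \sum_(i < n) Hmarg P i = - \sum_(i < n) pmean P i * ln (pmean P i)
      - \sum_(i < n) (1 - pmean P i) * ln (1 - pmean P i).
  rewrite -!sumrN -big_split; apply: eq_bigr => i _.
  rewrite /Hmarg big_bool /= (marg_false P1) !entrE; by [].
rewrite big_split /= in key.
rewrite eH /lam; lra.
Qed.
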